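(* Let $X$ be a set, let $c:X\times X\to(-\infty,\infty]$ be a symmetric cost function ($c(x,y)=c(y,x)$), let $Y\subseteq X$, and let $\tilde{c}:Y\times Y\to(-\infty,\infty]$ be the restriction of $c$, i.e. $\tilde{c}(x,y)=c(x,y)$ for all $x,y\in Y$. Let $\mathcal{C}_X$ denote the $c$-class (the image of the transform $K\mapsto K^c$ on subsets of $X$) and $\mathcal{C}_Y$ the $\tilde{c}$-class (the image of the transform $K\mapsto K^{\tilde{c}}$ on subsets of $Y$). Assume that $Y\in \mathcal{C}_X$. Then \[ \mathcal{C}_Y=\{ B\cap Y: \, Y^c \subseteq B \in \mathcal{C}_X\}.\]
   Context: For a symmetric cost $c:X\times X\to(-\infty,\infty]$ and $K\subseteq X$, the $c$-dual set is $K^c=\{y\in X:\ c(x,y)\ge 0 \ \forall x\in K\}$; analogously, for $A\subseteq Y$, $A^{\tilde{c}}=\{y\in Y:\ \tilde{c}(x,y)\ge 0\ \forall x\in A\}$. The map $K\mapsto K^c$ is an order reversing quasi involution, and its image $\mathcal{C}_X=\{K^c: K\subseteq X\}$ consists exactly of the sets $K\subseteq X$ with $K^{cc}=K$ (similarly $\mathcal{C}_Y$ consists of the $A\subseteq Y$ with $A^{\tilde{c}\tilde{c}}=A$). Here $Y^c$ denotes the $c$-dual of $Y$ taken in $X$. *)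

(* Defs.v *)
From mathcomp Require Import all_boot all_order all_algebra.
From mathcomp Require Import all_classical all_reals ereal.
Set Implicit Arguments. Unset Strict Implicit. Unset Printing Implicit Defensive.
Import Order.TTheory GRing.Theory Num.Theory.
Local Open Scope classical_set_scope.
Local Open Scope ereal_scope.

Definition cdual {R : realType} {X : Type} (c : X -> X -> \bar R) (K : set X)
  : set X := [set y | forall x, K x -> 0 <= c x y].

Definition cclass {R : realType} {X : Type} (c : X -> X -> \bar R) : set (set X) :=
  [set A | exists K : set X, A = cdual c K].

(* Subsets of Y are represented as subsets A of X with A `<=` Y.
   The restricted cost c~ = c on Y x Y; its dual of A `<=` Y, taken in Y:
   A^{c~} = {y in Y : c~(x,y) >= 0 for all x in A}. *)
Definition cdual_restr {R : realType} {X : Type} (c : X -> X -> \bar R)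
  (Y : set X) (A : set X) : set X :=
  [set y | Y y /\ forall x, A x -> 0 <= c x y].

Definition cclass_restr {R : realType} {X : Type} (c : X -> X -> \bar R)
  (Y : set X) : set (set X) :=
  [set A | exists K : set X, K `<=` Y /\ A = cdual_restr c Y K].

(* Main.v *)
Require Import Defs.
From mathcomp Require Import all_boot all_order all_algebra.
From mathcomp Require Import all_classical all_reals ereal.
Local Open Scope classical_set_scope.
Local Open Scope ereal_scope.

Theorem lemma8p15 (R : realType) (X : Type) (c : X -> X -> \bar R) (Y : set X)
  (c_sym : forall x y, c x y = c y x)
  (c_ninfty : forall x y, c x y != -oo)
  (hY : cclass c Y) :
  cclass_restr c Y =
  [set A | exists B : set X, [/\ cclass c B, cdual c Y `<=` B & A = B `&` Y]].
Proof.
apply/seteqP; split => A /=.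
- move=> [K [KY ->]]; exists (cdual c K); split.
  + by exists K.
  + by move=> y Hy x Kx; apply: Hy; apply: KY.
  + apply/seteqP; split => y /=; first by move=> [Yy H]; split.
    by move=> [H Yy]; split.
- move=> [B [[K ->] YcB ->]].
  have [L HL] := hY.
  exists (cdual c (cdual c K)); split.
  + move=> x Hx; rewrite HL => l Ll.
    have : cdual c Y l.
      move=> y; rewrite HL => Hy; rewrite c_sym; exact: Hy.
    move/YcB => Hl; exact: Hx.
  + apply/seteqP; split => y /=.
    * move=> [Hy Yy]; split => // k Kk; rewrite c_sym; exact: (Kk y Hy).
    * move=> [Yy H]; split => //= k Kk; apply: (H k) => b Hb; rewrite c_sym; exact: (Hb k Kk).
Qed.
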